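(* Consider the principal–agent model described in the context. Let $(a^{\mathcal J},u^{\mathcal J})$ be a maximizer of $\max_{(a,u)\in\mathcal{J}}\{\mathbb{E}[X(a)\mid a]-c(a)-u\}$. Suppose the quota-bonus contract $s_q(x)=b\,\mathbf{1}_{\{x\ge q\}}$ (with $q,b\in[0,\infty)$) implements $(a^{\mathcal J},u^{\mathcal J})$. Then $b=\dfrac{c(a^{\mathcal J})+u^{\mathcal J}}{1-F(q\mid a^{\mathcal J})}$, and either $q=L(a^{\mathcal J})$, or $q>L(a^{\mathcal J})$ and \[ \frac{-F_a(q\mid a^{\mathcal J})}{1-F(q\mid a^{\mathcal J})}=\frac{c'(a^{\mathcal J})}{c(a^{\mathcal J})+u^{\mathcal J}}. \]
   Context: Model. An agent chooses effort $a\ge 0$. The outcome $X(a)$ is a continuous random variable with support $[L(a),\bar x]$, where $\bar x>0$ is fixed (possibly $+\infty$) and $L:[0,\infty)\to[0,\bar x)$ is nondecreasing on $[0,\infty)$ and continuously differentiable on $(0,\infty)$. Effort costs $c(a)$, where $c:[0,\infty)\to[0,\infty)$ is twice differentiable with $c'(a)>0$, $c''(a)\ge 0$. $X(a)$ has density $f(x\mid a)$ and cdf $F(x\mid a)$; for each fixed $x\in(L(a),\bar x]$, $f(x\mid a)$ and $F(x\mid a)$ are differentiable in $a>0$ with derivatives $f_a,F_a$, both continuous on $(L(a),\bar x]\times(0,\infty)$, and $F_a<0$ there. A contract is $s:\mathbb{R}_{\ge0}\to\mathbb{R}_{\ge0}$ (LL: $s\ge0$). $E^P(a,s)=\int_{L(a)}^{\bar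 x}[x-s(x)]f(x\mid a)\,dx$, $E^A(a,s)=\int_{L(a)}^{\bar x}s(x)f(x\mid a)\,dx-c(a)$, reservation utility $u_0\ge0$. Constraints: (IC) the chosen effort $a_s\in\arg\max_{a\ge0}E^A(a,s)$; (IR) $E^A(a_s,s)\ge u_0$; (LL). Indifferent agents choose the effort most favorable to the principal. Standing assumption: (i) $\mathbb{E}[X(a)\mid a]<\infty$ for all $a\ge0$ and is continuous in $a$ on $[0,\infty)$; (ii) $\lim_{a\to\infty}\{\mathbb{E}[X(a)\mid a]-c(a)\}=-\infty$; (iii) $a\mapsto\sup_{x\in(L(a),\bar x]}f_a(x\mid a)/f(x\mid a)$ is continuous on $(0,\infty)$; (iv) for any contract $s$ with $\mathbb{E}[s(X(a))\mid a]<\infty$, the limit $h\uparrow0$ of $\int_{L(a)}^{\bar x}\frac{f(x\mid a+h)-f(x\mid a)}{h}s(x)\,dx$ may be taken inside the integral. A contract $s$ implements $(a,u)$ if $(a,s)$ satisfies IC, IR, LL and $u=E^A(a,s)$. $\mathcal{J}=\{(a,u)\mid a>0,\ u\ge u_0,\ \sup_{x\in(L(a),\bar x]} f_a(x\mid a)/f(x\mid a)\ge c'(a)/(c(a)+u)\}\cup\{(0,u)\mid u\ge u_0\}$. *)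

(* Defs.v *)
From HB Require Import structures.
From mathcomp Require Import all_boot all_order all_algebra.
From mathcomp Require Import all_classical all_reals all_analysis.
Set Implicit Arguments. Unset Strict Implicit. Unset Printing Implicit Defensive.
Import Order.TTheory GRing.Theory Num.Theory.
Import numFieldNormedType.Exports.
Local Open Scope classical_set_scope.
Local Open Scope ring_scope.

Section Model.
Variable R : realType.

(* support [L(a), xbar] of X(a); xbar may be +oo *)
Definition supp (xbar : \bar R) (L : R -> R) (a : R) : set R :=
  [set x | L a <= x /\ (x%:E <= xbar)%E].
Definition supp_o (xbar : \bar R) (L : R -> R) (a : R) : set R :=
  [set x | L a < x /\ (x%:E <= xbar)%E].

Definition expect (xbar : \bar R) (L : R -> R) (f : R -> R -> R)
    (g : R -> R) (a : R) : \bar R :=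
  (\int[lebesgue_measure]_(x in supp xbar L a) (g x * f x a)%:E)%E.

Definition EA xbar L f (c : R -> R) (s : R -> R) (a : R) : \bar R :=
  (expect xbar L f s a - (c a)%:E)%E.

Definition EP xbar L f (s : R -> R) (a : R) : \bar R :=
  expect xbar L f (fun x => x - s x) a.

(* s implements (a,u): IC, IR, LL and u = E^A(a,s) *)
Definition implements xbar L f c (u0 : R) (s : R -> R) (a u : R) : Prop :=
  [/\ 0 <= a /\ (forall a', 0 <= a' -> (EA xbar L f c s a' <= EA xbar L f c s a)%E),
      (u0%:E <= EA xbar L f c s a)%E,
      (forall x, 0 <= x -> 0 <= s x) &
      u%:E = EA xbar L f c s a].

Definition sup_ratio xbar L (f fa : R -> R -> R) (a : R) : \bar R :=
  ereal_sup [set (fa x a / f x a)%:E | x in supp_o xbar L a].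

Definition Jset xbar L f fa (c dc : R -> R) (u0 : R) : set (R * R) :=
  [set p | 0 < p.1 /\ u0 <= p.2 /\
           ((dc p.1 / (c p.1 + p.2))%:E <= sup_ratio xbar L f fa p.1)%E]
  `|` [set p | p.1 = 0 /\ u0 <= p.2].

Definition Jobj xbar L f (c : R -> R) (p : R * R) : \bar R :=
  (expect xbar L f id p.1 - (c p.1 + p.2)%:E)%E.

Definition quota_bonus (q b : R) (x : R) : R := if q <= x then b else 0.

Definition model_assumptions (xbar : \bar R) (L dL c dc ddc : R -> R)
    (f F fa Fa : R -> R -> R) : Prop :=
  (0%:E < xbar)%E /\
  [/\
   [/\ (forall a : R, 0 <= a -> 0 <= L a /\ ((L a)%:E < xbar)%E),
       (forall a b : R, 0 <= a -> a <= b -> L a <= L b),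
       (forall a : R, 0 < a -> is_derive a 1 L (dL a)) &
       {in `]0, +oo[, continuous dL}],
   [/\ (forall a : R, 0 <= a -> 0 <= c a),
       (forall a : R, 0 < a -> is_derive a 1 c (dc a) /\ is_derive a 1 dc (ddc a)),
       (h^-1 * (c h - c 0) @[h --> 0^'+] --> dc 0),
       (h^-1 * (dc h - dc 0) @[h --> 0^'+] --> ddc 0) &
       (forall a : R, 0 <= a -> 0 < dc a /\ 0 <= ddc a)],
   (* X(a): continuous r.v. with density f(.|a), cdf F(.|a), support [L(a), xbar] *)
   [/\ (forall a : R, 0 <= a -> measurable_fun setT (fun x => f x a)
                             /\ (forall x : R, 0 <= f x a)),
       (forall a x : R, 0 <= a -> ~ supp xbar L a x -> f x a = 0),
       (forall a x : R, 0 <= a -> supp_o xbar L a x -> 0 < f x a),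
       (forall a : R, 0 <= a -> expect xbar L f (fun _ => 1) a = 1%E) &
       (forall a x : R, 0 <= a ->
          (F x a)%:E = (\int[lebesgue_measure]_(t in `]-oo, x]) (f t a)%:E)%E)],
   [/\ (forall a x : R, 0 < a -> supp_o xbar L a x ->
          is_derive a 1 (fun b => f x b) (fa x a) /\
          is_derive a 1 (fun b => F x b) (Fa x a)),
       {in [set p : R * R | 0 < p.2 /\ supp_o xbar L p.2 p.1],
          continuous (fun p : R * R => fa p.1 p.2)},
       {in [set p : R * R | 0 < p.2 /\ supp_o xbar L p.2 p.1],
          continuous (fun p : R * R => Fa p.1 p.2)} &
       (forall a x : R, 0 < a -> supp_o xbar L a x -> Fa x a < 0)] &
   [/\ (forall a : R, 0 <= a -> expect xbar L f id a \is a fin_num),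
       {in `[0, +oo[, continuous (fun a => fine (expect xbar L f id a))},
       ((expect xbar L f id a - (c a)%:E)%E @[a --> +oo] --> -oo%E),
       {in `]0, +oo[, continuous (sup_ratio xbar L f fa)} &
       (forall (s : R -> R) (a : R), (forall x, 0 <= x -> 0 <= s x) -> 0 < a ->
          (expect xbar L f s a < +oo)%E ->
          ((\int[lebesgue_measure]_(x in supp xbar L a)
                       ((f x (a + h) - f x a) / h * s x)%:E)%E
            @[h --> 0^'-] --> (\int[lebesgue_measure]_(x in supp xbar L a)
                           (fa x a * s x)%:E)%E))]].

End Model.

(* Main.v *)
Require Import Defs.
From HB Require Import structures.
From mathcomp Require Import all_boot all_order all_algebra.
From mathcomp Require Import all_classical all_reals all_analysis.
From mathcomp Require Import ring lra measurable_realfun.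
Import Order.TTheory GRing.Theory Num.Theory.
Import numFieldNormedType.Exports.
Local Open Scope classical_set_scope.
Local Open Scope ring_scope.

Lemma fermat_itv (R : realType) (f : R -> R) (a b c : R) :
  a <= b -> derivable f c 1 -> c \in `]a, b[%R ->
  (forall t, t \in `]a, b[%R -> f t <= f c) -> is_derive c 1 f 0.
Proof.
move=> leab fdc cab cmax; apply: DeriveDef; first exact: fdc.
apply/eqP; rewrite eq_le; apply/andP; split.
  rewrite ['D_1 f c]cvg_at_rightE; last exact: fdc.
  apply: limr_le.
    have dfc := fdc.
    rewrite -(cvg_at_rightE (fun h : R => h^-1 *: ((f \o shift c) _ - f c))) //.
    apply: cvg_trans dfc; apply: cvg_app.
    move=> A [e egt0 Ae]; exists e => // x xe xgt0; apply: Ae => //.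
    exact/lt0r_neq0.
  near=> h; apply: mulr_ge0_le0.
    by rewrite invr_ge0; apply: ltW; near: h; exists 1 => /=.
  rewrite subr_le0 [_%:A]mulr1; apply: cmax; near: h.
  exists (b - c); first by rewrite /= subr_gt0 (itvP cab).
  move=> h; rewrite /= distrC subr0 /= in_itv /= -ltrBrDr.
  move=> /(le_lt_trans (ler_norm _)) -> /ltr_pDl -> //.
  by rewrite (itvP cab).
rewrite ['D_1 f c]cvg_at_leftE; last exact: fdc.
apply: limr_ge.
  have dfc := fdc; rewrite -(cvg_at_leftE (fun h => h^-1 *: ((f \o shift c) _ - f c))) //.
  apply: cvg_trans dfc; apply: cvg_app.
  move=> A [e egt0 Ae]; exists e => // x xe xgt0; apply: Ae => //.
  exact/ltr0_neq0.
near=> h; apply: mulr_le0.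
  by rewrite invr_le0; apply: ltW; near: h; exists 1 => /=.
rewrite subr_le0 [_%:A]mulr1; apply: cmax; near: h.
exists (c - a); first by rewrite /= subr_gt0 (itvP cab).
move=> h; rewrite /= distrC subr0.
move=> /ltr_normlP []; rewrite ltrBrDl ltrBlDl in_itv /= => -> _.
by move=> /ltr_nDl -> //; rewrite (itvP cab).
Unshelve. all: by end_near. Qed.

Lemma fermat_near (R : realType) (f : R -> R) (c : R) :
  derivable f c 1 -> (\forall t \near c, f t <= f c) -> is_derive c 1 f 0.
Proof.
move=> fdc /nbhs_ballP [e /= e0 He].
apply: (@fermat_itv _ f (c - e) (c + e)) => //.
- lra.
- rewrite in_itv /=; apply/andP; split; lra.
- move=> t; rewrite in_itv /= => /andP[h1 h2]; apply: He.
  rewrite /ball /= ltr_norml; apply/andP; split; lra.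
Qed.
Lemma tail_int (R : realType) (phi : R -> R) (q F : R) :
  measurable_fun setT phi -> (forall x, 0 <= phi x) ->
  (\int[@lebesgue_measure R]_(x in setT) (phi x)%:E = 1)%E ->
  F%:E = (\int[@lebesgue_measure R]_(t in `]-oo, q]) (phi t)%:E)%E ->
  (\int[@lebesgue_measure R]_(x in `[q, +oo[) (phi x)%:E)%E = (1 - F)%:E.
Proof.
move=> mphi phi0 H1 FE.
have mE := (measurable_EFinP _ phi).2 mphi.
rewrite -set_itvNyy (@itv_bndbnd_setU _ _ _ (BRight q)) // in H1.
rewrite ge0_integral_setU // in H1; last 3 first.
- exact: measurable_funTS.
- by move=> x _; rewrite lee_fin.
- apply/disj_setPS => x [] /=; rewrite !in_itv /= ?andbT => h1 h2.
  by move: (le_lt_trans h1 h2); rewrite ltxx.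
rewrite -FE integral_itv_obnd_cbnd in H1; last exact: measurable_funTS.
move: H1; move: (\int[_]_(x in _) _)%E => I.
case: I => [r| |] //= H.
move: H => /eqP; rewrite eqe => /eqP H; congr EFin; lra.
Qed.
Lemma expect_full (R : realType) (xbar : \bar R) (L : R -> R) (f : R -> R -> R) g a :
  (forall x, ~ supp xbar L a x -> f x a = 0) ->
  expect xbar L f g a = (\int[@lebesgue_measure R]_(x in setT) (g x * f x a)%:E)%E.
Proof.
move=> f0; rewrite /expect integral_mkcond; apply: eq_integral => x _.
rewrite patchE; case: ifPn => // /negP; rewrite inE => /f0 ->.
by rewrite mulr0.
Qed.

Lemma expect_qb (R : realType) (xbar : \bar R) (L : R -> R) (f : R -> R -> R) a q b :
  (forall x, ~ supp xbar L a x -> f x a = 0) ->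
  measurable_fun setT (fun x => f x a) -> (forall x, 0 <= f x a) -> 0 <= b ->
  expect xbar L f (quota_bonus q b) a =
  (b%:E * \int[@lebesgue_measure R]_(x in `[q, +oo[) (f x a)%:E)%E.
Proof.
move=> f0 mf fge0 b0; rewrite expect_full //.
rewrite -ge0_integralZl_EFin //; try (by move=> x _; rewrite lee_fin);
  try (by apply: measurable_funTS; exact/measurable_EFinP).
rewrite [RHS]integral_mkcond; apply: eq_integral => x _.
rewrite patchE /quota_bonus mem_setE in_itv /= andbT; case: ifPn => //.
by rewrite mul0r.
Qed.

Lemma deriv0_at_max (R : realType) (f : R -> R) (c df : R) :
  is_derive c 1 f df -> (\forall t \near c, f t <= f c) -> df = 0.
Proof.
move=> H Hn.
have [dfc dv] := H.
have [_ dv0] := @fermat_near R f c dfc Hn.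
by rewrite -dv dv0.
Qed.

Theorem lemma1 (R : realType) (xbar : \bar R) (L dL c dc ddc : R -> R)
    (f F fa Fa : R -> R -> R) (u0 : R)
    (Hmodel : model_assumptions xbar L dL c dc ddc f F fa Fa)
    (Hu0 : 0 <= u0)
    (aJ uJ : R)
    (HJ : Jset xbar L f fa c dc u0 (aJ, uJ))
    (Hmax : forall p, Jset xbar L f fa c dc u0 p ->
              (Jobj xbar L f c p <= Jobj xbar L f c (aJ, uJ))%E)
    (HaJ : 0 < aJ)
    (q b : R) (Hq : 0 <= q) (Hb : 0 <= b)
    (Himpl : implements xbar L f c u0 (quota_bonus q b) aJ uJ) :
  b = (c aJ + uJ) / (1 - F q aJ) /\
  (q = L aJ \/
   (L aJ < q /\ - Fa q aJ / (1 - F q aJ) = dc aJ / (c aJ + uJ))).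
Proof.
case: Hmodel => xbar0 [[HL0 HLmono HLd HLdc] [Hc0 Hcd _ _ Hdc]
  [Hf Hf0 Hfpos Hf1 HF] [Hder _ _ HFa] _].
have Hint1 : forall a, 0 <= a ->
    (\int[@lebesgue_measure R]_(x in setT) (f x a)%:E = 1)%E.
  move=> a a0; rewrite -(Hf1 a a0) expect_full; last by move=> x; apply: Hf0.
  by apply: eq_integral => x _; rewrite mul1r.
have Htail : forall a, 0 <= a ->
    (\int[@lebesgue_measure R]_(x in `[q, +oo[) (f x a)%:E)%E = (1 - F q a)%:E.
  move=> a a0; apply: tail_int; [exact: (Hf a a0).1 | exact: (Hf a a0).2 |
    exact: Hint1 | exact: HF].
have HEA : forall a, 0 <= a ->
    EA xbar L f c (quota_bonus q b) a = (b * (1 - F q a) - c a)%:E.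
  move=> a a0; rewrite /EA expect_qb //; last 3 first.
  - by move=> x; apply: Hf0.
  - exact: (Hf a a0).1.
  - exact: (Hf a a0).2.
  by rewrite Htail // -EFinM -EFinB.
case: Himpl => [[_ IC] IR _ uE].
have gle : forall t, 0 <= t ->
    b * (1 - F q t) - c t <= b * (1 - F q aJ) - c aJ.
  move=> t t0; have := IC t t0; rewrite !HEA ?(ltW HaJ) // lee_fin; exact.
have uJE : uJ = b * (1 - F q aJ) - c aJ.
  by move: uE; rewrite HEA ?(ltW HaJ) //; case.
have u0J : u0 <= uJ by move: IR; rewrite -uE lee_fin.
have [dcJ ddcJ] := Hcd aJ HaJ.
have dcpos := (Hdc aJ (ltW HaJ)).1.
have nearpos : \forall t \near aJ, 0 < t.
  have := @near_in_itvoy R 0 aJ; rewrite in_itv /= andbT => /(_ HaJ).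
  by apply: filterS => t; rewrite in_itv /= andbT.
have cpos : 0 < c aJ.
  rewrite lt_def (Hc0 aJ (ltW HaJ)) andbT; apply/negP => /eqP c0.
  have : - dc aJ = 0.
    apply: (@deriv0_at_max _ (- c)).
    apply: filterS nearpos => t tpos /=.
    change (- c t <= - c aJ); have := Hc0 t (ltW tpos); rewrite c0; lra.
  lra.
have F1 : 1 - F q aJ != 0.
  apply/negP => /eqP F0; move: uJE; rewrite F0 mulr0 => uJE'; lra.
have bE : b = (c aJ + uJ) / (1 - F q aJ).
  rewrite uJE; field; exact: F1.
split => //.
have [qL|qL|qL] := ltgtP q (L aJ); last by left.
- exfalso.
  have Lcont : L x @[x --> aJ] --> L aJ.
    apply: differentiable_continuous; apply/derivable1_diffP.
    by case: (HLd aJ HaJ).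
  have nearL : \forall t \near aJ, q < L t by exact: (cvgr_gt _ Lcont _ qL).
  have F0 : forall t, 0 < t -> q < L t -> F q t = 0.
    move=> t tpos qLt.
    apply/eqP; rewrite -(@eqe R) HF ?(ltW tpos) //.
    apply/eqP; apply: integral0_eq => x; rewrite /= in_itv /= => xq.
    rewrite Hf0 ?(ltW tpos) //; rewrite /supp /= => -[Lx _].
    have := le_trans Lx xq; lra.
  have : - dc aJ = 0.
    apply: (@deriv0_at_max _ (- c)).
    near=> t.
    have tpos : 0 < t by near: t.
    have qLt : q < L t by near: t.
    change (- c t <= - c aJ).
    have := gle t (ltW tpos); rewrite (F0 t tpos qLt) (F0 aJ HaJ qL); lra.
  lra.
- right; split => //.
  have qx : (q%:E <= xbar)%E.
    rewrite leNgt; apply/negP => xq.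
    have : (\int[@lebesgue_measure R]_(x in `[q, +oo[) (f x aJ)%:E)%E = 0%E.
      apply: integral0_eq => x; rewrite /= in_itv /= andbT => qx'.
      rewrite Hf0 ?(ltW HaJ) //; rewrite /supp /= => -[_ xb].
      have := le_lt_trans xb xq; rewrite lte_fin; lra.
    rewrite Htail ?(ltW HaJ) // => -[] /eqP; apply/negP; exact: F1.
  have Hs : supp_o xbar L aJ q by split.
  have [_ HFd] := Hder aJ q HaJ Hs.
  have Hh : is_derive aJ 1 ((- b) \*: (fun t => F q t) + (- c))
                              ((- b) *: Fa q aJ + - dc aJ).
    apply: is_deriveD.
  have E0 := @deriv0_at_max R _ _ _ Hh.
  have {}E0 : (- b) *: Fa q aJ + - dc aJ = 0.
    apply: E0; apply: filterS nearpos => t tpos.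
    change (- b * F q t + - c t <= - b * F q aJ + - c aJ).
    have := gle t (ltW tpos); lra.
  change (- b * Fa q aJ + - dc aJ = 0) in E0.
  have E1 : dc aJ = - b * Fa q aJ by lra.
  have E2 : c aJ + uJ = b * (1 - F q aJ) by lra.
  have b0 : b != 0.
    apply/negP => /eqP b0; move: E2; rewrite b0 mul0r; lra.
  rewrite E1 E2; field.
  by rewrite F1 b0.
Unshelve. all: by end_near.
Qed.
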